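(* For a chemical reaction network satisfying (H1) and (H2): (1) the constant monomial does not appear in any derivative $x^{(\ell)}$, $\ell\ge1$, of any species $X$; (2) if $X$ is a non-intermediate species and $\ell\ge1$, every monomial of degree 1 appearing in $x^{(\ell)}$ is of the form $w$ for an intermediate species $W\in\mathscr{W}_X$, i.e., the only degree-one monomials of $x^{(\ell)}$ are among those appearing in $\dot x$.
   Context: Species are capital letters, concentrations lower-case letters. A reaction network has reactions $y\to y'$ between complexes with rate constants $k_{yy'}>0$ (vector $\mathbf{k}$); mass-action system $\dot{\mathbf{x}}=\sum k_{yy'}\mathbf{x}^y(y'-y)$. Total derivative of a polynomial: $\dot\varphi=\sum_i\frac{\partial\varphi}{\partial x_i}\dot x_i$ with $\dot x_i$ replaced by the right-hand side; $\varphi^{(\ell)}$ its $\ell$-th iterate, a polynomial in the concentration variables with coefficients polynomial in $\mathbf{k}$. A monomial ''appears in'' $\varphi^{(\ell)}$ if its coefficient is a nonzero polynomial in $\mathbf{k}$. (H1) Every connected component has the form $Y+S_0\rightleftarrows U_1\to Y+S_1\rightleftarrows\cdots\rightleftarrows U_L\to Y+S_L$ (reactions $Y+S_{j-1}\to U_j$, $U_j\to Y+S_{j-1}$, $U_j\to Y+S_j$), unique enzyme $Y$; intermediate species ($U_j$) distinct throughout the network; non-intermediates of a component pairwise distinct but may appear in other components; each complex in a unique component. $\mathscr{S}_U$ = substrates/products of the component of intermediate $U$. (H2) A partition $\mathscr{S}^{(0)}\sqcup\cdots\sqcup\mathscr{S}^{(M)}$ ($M\ge2$, nonempty, $\mathscr{S}^{(0)}$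 the intermediates) with: for each intermediate $U$ with enzyme $Y$, some $\alpha\ge1$ has $\mathscr{S}_U\subseteq\mathscr{S}^{(\alpha)}$, $Y\notin\mathscr{S}^{(\alpha)}$. An intermediate $U$ reacts to a non-intermediate $X_1$ if there is a reaction $U\to X_1+X_2$ with $X_2$ non-intermediate. $\mathscr{W}_X$ = set of intermediates that react to $X$. *)

(* Defs.v *)
From mathcomp Require Import all_boot all_order all_algebra.
Set Implicit Arguments. Unset Strict Implicit. Unset Printing Implicit Defensive.
Import Order.TTheory GRing.Theory Num.Theory.

(* Species form a finite type S; reactions are indexed by a finite type R,
   reaction r being src r -> tgt r, with symbolic rate constant k_r. *)

Definition xmon (S : finType) := {ffun S -> nat}.
Definition kmon (R : finType) := {ffun R -> nat}.

(* A polynomial in x with coefficients polynomials in k, over Z: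
   p a b = coefficient of x^a k^b.  So the coefficient of x^a (a polynomial
   in k) is the function (p a). *)
Definition poly (S R : finType) := xmon S -> kmon R -> int.

(* complexes: a single species A, and A + B *)
Definition cplx1 (S : finType) (A : S) : xmon S := [ffun s => nat_of_bool (s == A)].
Definition cplx2 (S : finType) (A B : S) : xmon S :=
  [ffun s => (nat_of_bool (s == A) + nat_of_bool (s == B))%N].

Definition kzero (R : finType) : kmon R := [ffun _ => 0%N].

Definition pvar (S R : finType) (X : S) : poly S R :=
  fun a b => if (a == cplx1 X) && (b == kzero R) then 1%R else 0%R.

Definition mon_le (S : finType) (y a : xmon S) : bool := [forall s, y s <= a s].
Definition msub (S : finType) (a y : xmon S) : xmon S := [ffun s => a s - y s].
Definition madd1 (S : finType) (a : xmon S) (i : S) : xmon S :=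
  [ffun s => a s + nat_of_bool (s == i)].
Definition ksub1 (R : finType) (b : kmon R) (r : R) : kmon R :=
  [ffun t => b t - nat_of_bool (t == r)].

(* Total derivative along the mass-action system
     xdot = sum_r k_r x^(src r) (tgt r - src r):
   pdot = sum_i (d p / d x_i) * sum_r k_r x^(src r) (tgt r i - src r i).
   Coefficient of x^a k^b of (dp/dx_i) * k_r x^y is
   ((a-y)_i + 1) * p((a-y)+e_i, b-e_r) when y <= a and b_r >= 1, else 0. *)
Definition tdiff (S R : finType) (src tgt : R -> xmon S) (p : poly S R) : poly S R :=
  fun a b =>
    (\sum_(i : S) \sum_(r : R)
       if mon_le (src r) a && (0 < b r)%N then
         (((tgt r i)%:Z - (src r i)%:Z) * ((msub a (src r) i).+1)%:Z
           * p (madd1 (msub a (src r)) i) (ksub1 b r))%R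
       else 0%R)%R.

Definition nderiv (S R : finType) (src tgt : R -> xmon S) (l : nat) (X : S) : poly S R :=
  iter l (tdiff src tgt) (@pvar S R X).

Definition appears (S R : finType) (p : poly S R) (a : xmon S) : Prop :=
  exists b, p a b <> 0%R.

Definition mdeg (S : finType) (a : xmon S) : nat := \sum_(s : S) a s.

(* Witness data: nc components c < nc; component c has enzyme Y c,
   length L c >= 1, substrates/products Sb c 0, ..., Sb c (L c), and
   intermediates U c 0, ..., U c (L c - 1) (U c j is U_{j+1} of the paper). *)

Definition is_inter (S : finType) (nc : nat) (L : nat -> nat) (U : nat -> nat -> S)
  (s : S) : Prop :=
  exists c j, (c < nc)%N /\ (j < L c)%N /\ U c j = s.

Definition comp_reaction (S : finType) (Y : nat -> S) (Sb U : nat -> nat -> S)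
  (c j : nat) (y y' : xmon S) : Prop :=
  (y = cplx2 (Y c) (Sb c j) /\ y' = cplx1 (U c j)) \/
  (y = cplx1 (U c j) /\ y' = cplx2 (Y c) (Sb c j)) \/
  (y = cplx1 (U c j) /\ y' = cplx2 (Y c) (Sb c j.+1)).

Definition H1 (S R : finType) (src tgt : R -> xmon S)
  (nc : nat) (Y : nat -> S) (L : nat -> nat) (Sb U : nat -> nat -> S) : Prop :=
  injective (fun r => (src r, tgt r)) /\
  (forall c, (c < nc)%N -> (0 < L c)%N) /\
  (forall r, exists c j, [/\ (c < nc)%N, (j < L c)%N & comp_reaction Y Sb U c j (src r) (tgt r)]) /\
  (forall c j y y', (c < nc)%N -> (j < L c)%N -> comp_reaction Y Sb U c j y y' ->
      exists r, src r = y /\ tgt r = y') /\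
  (forall c j c' j', (c < nc)%N -> (j < L c)%N -> (c' < nc)%N -> (j' < L c')%N ->
      U c j = U c' j' -> c = c' /\ j = j') /\
  (forall c j, (c < nc)%N -> (j <= L c)%N -> Y c <> Sb c j) /\
  (forall c j j', (c < nc)%N -> (j <= L c)%N -> (j' <= L c)%N -> Sb c j = Sb c j' -> j = j') /\
  (forall c, (c < nc)%N -> ~ is_inter nc L U (Y c)) /\
  (forall c j, (c < nc)%N -> (j <= L c)%N -> ~ is_inter nc L U (Sb c j)) /\
  (forall c j c' j', (c < nc)%N -> (j <= L c)%N -> (c' < nc)%N -> (j' <= L c')%N ->
      cplx2 (Y c) (Sb c j) = cplx2 (Y c') (Sb c' j') -> c = c').

(* Partition S^(0) ⊔ ... ⊔ S^(M) given by the block index P : S -> nat. *)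
Definition H2 (S : finType) (nc : nat) (Y : nat -> S) (L : nat -> nat)
  (Sb U : nat -> nat -> S) (M : nat) (P : S -> nat) : Prop :=
  (2 <= M)%N /\
  (forall s, (P s <= M)%N) /\
  (forall al, (al <= M)%N -> exists s, P s = al) /\
  (forall s, P s = 0%N <-> is_inter nc L U s) /\
  (forall c, (c < nc)%N -> (0 < L c)%N ->
     exists al, [/\ (1 <= al)%N,
                    (forall j, (j <= L c)%N -> P (Sb c j) = al) &
                    P (Y c) <> al]).

Definition reacts_to (S R : finType) (src tgt : R -> xmon S)
  (nc : nat) (L : nat -> nat) (U : nat -> nat -> S) (W X : S) : Prop :=
  is_inter nc L U W /\
  exists r X2, [/\ src r = cplx1 W, tgt r = cplx2 X X2 & ~ is_inter nc L U X2].

(* Main.v *)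
Require Import Defs.
From mathcomp Require Import all_boot all_order all_algebra.
From mathcomp Require Import zify.
Import Order.TTheory GRing.Theory Num.Theory.

Section Aux.
Variables (S R : finType) (src tgt : R -> xmon S)
  (nc : nat) (Y : nat -> S) (L : nat -> nat) (Sb U : nat -> nat -> S).

Lemma cplx1E (A s : S) : cplx1 A s = nat_of_bool (s == A).
Proof. by rewrite ffunE. Qed.

Lemma cplx2E (A B s : S) : cplx2 A B s = (nat_of_bool (s == A) + nat_of_bool (s == B))%N.
Proof. by rewrite ffunE. Qed.

Lemma cplx2C (A B : S) : cplx2 A B = cplx2 B A.
Proof. by apply/ffunP => s; rewrite !cplx2E addnC. Qed.

Lemma cplx1_inj (A B : S) : cplx1 A = cplx1 B -> A = B.
Proof. move/ffunP/(_ A); rewrite !cplx1E eqxx; by case: eqP. Qed.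

Lemma mdeg1 (a : xmon S) : mdeg a = 1%N -> exists W, a = cplx1 W.
Proof.
move=> Ha; case: (pickP (fun s => 0 < a s)%N) => [W HW | H0]; last first.
  have: mdeg a = 0%N.
    by rewrite /mdeg big1 // => s _; move: (H0 s) => /=; case: (a s).
  by rewrite Ha.
move: Ha; rewrite /mdeg (bigD1 W) //= => Ha.
have Hr : (\sum_(s | s != W) a s = 0)%N by lia.
move/eqP: Hr; rewrite sum_nat_eq0 => /forall_inP Hz.
exists W; apply/ffunP => s; rewrite cplx1E.
case: (eqVneq s W) => [->| ne] /=; first lia.
by apply/eqP; exact: Hz.
Qed.

Lemma mdeg_cplx1 (W : S) : mdeg (cplx1 W) = 1%N.
Proof.
rewrite /mdeg (bigD1 W) //= big1 ?cplx1E ?eqxx // => s /negPf.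
by rewrite cplx1E => ->.
Qed.

Lemma sum_neq0 (I : finType) (F : I -> int) : ((\sum_i F i) != 0)%R -> exists i, (F i != 0)%R.
Proof.
move=> H; apply/existsP; apply: contraNT H => /existsPn H.
by apply/eqP; rewrite big1 // => i _; move: (H i); rewrite negbK => /eqP.
Qed.

End Aux.
Arguments sum_neq0 {I F}.
Arguments mdeg1 {S a}.
Arguments mdeg_cplx1 {S}.
Arguments cplx1_inj {S A B}.

Section Main.
Variables (S R : finType) (src tgt : R -> xmon S)
  (nc : nat) (Y : nat -> S) (L : nat -> nat) (Sb U : nat -> nat -> S).

Definition classif := forall r, exists c j, [/\ (c < nc)%N, (j < L c)%N &
  ((src r = cplx2 (Y c) (Sb c j) /\ Y c <> Sb c j) \/
   (src r = cplx1 (U c j) /\ exists j', tgt r = cplx2 (Y c) (Sb c j') /\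
      ~ is_inter nc L U (Y c) /\ ~ is_inter nc L U (Sb c j')))].

Lemma classify : H1 src tgt nc Y L Sb U -> classif.
Proof.
case=> [_ [_ [Hr [_ [_ [HYS [_ [HY [HS _]]]]]]]]] r.
have [c [j [hc hj Hcr]]] := Hr r.
exists c, j; split=> //.
case: Hcr => [[-> _]|[[-> ->]|[-> ->]]].
- by left; split=> //; apply: HYS => //; lia.
- right; split=> //; exists j; split=> //; split; first exact: HY.
  by apply: HS => //; lia.
- right; split=> //; exists j.+1; split=> //; split; first exact: HY.
  by apply: HS => //; lia.
Qed.

Lemma key (Hcl : classif) (p : Defs.poly S R) a b :
  mdeg a = 1%N -> (tdiff src tgt p a b != 0)%R ->
  exists W r i c j j', a = cplx1 W /\ src r = cplx1 W /\ W = U c j /\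
    ((c < nc)%N /\ (j < L c)%N) /\ tgt r = cplx2 (Y c) (Sb c j') /\
    ~ is_inter nc L U (Y c) /\ ~ is_inter nc L U (Sb c j') /\
    (((tgt r i)%:Z - (src r i)%:Z) != 0)%R /\ (p (cplx1 i) (ksub1 b r) != 0)%R.
Proof.
move=> /mdeg1 [W ->] H.
have [i Hi] := sum_neq0 H.
have [r Hr] := sum_neq0 Hi.
move: Hr; case: ifP => // /andP [Hle Hb] Hne.
have [c [j [hc hj [[Hs HYS]|[Hs [j' [Ht [HY HS]]]]]]]] := Hcl r.
  exfalso; rewrite Hs in Hle; move/forallP: Hle => Hle.
  move: (Hle (Y c)) (Hle (Sb c j)); rewrite !cplx2E !cplx1E !eqxx /=.
  case: eqP => [->|] //=; case: eqP => [->|] //=.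
  by case: eqP.
rewrite Hs in Hle; move/forallP: Hle => /(_ (U c j)); rewrite !cplx1E !eqxx /=.
case: eqP => // HUW _.
rewrite Hs -HUW in Hne.
have E1 : madd1 (msub (cplx1 (U c j)) (cplx1 (U c j))) i = cplx1 i.
  by apply/ffunP => s; rewrite !ffunE subnn.
have E2 : msub (cplx1 (U c j)) (cplx1 (U c j)) i = 0%N by rewrite ffunE subnn.
rewrite E1 E2 mulr1 mulf_eq0 negb_or in Hne.
case/andP: Hne => Hn1 Hn2.
exists W, r, i, c, j, j'; rewrite -HUW Hs; do !split => //.
Qed.

End Main.
Arguments key {S R src tgt nc Y L Sb U} Hcl {p a b}.
Arguments classify {S R src tgt nc Y L Sb U}.

Theorem mainTheorem6 (S R : finType) (src tgt : R -> xmon S)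
  (nc : nat) (Y : nat -> S) (L : nat -> nat) (Sb U : nat -> nat -> S)
  (M : nat) (P : S -> nat) :
  H1 src tgt nc Y L Sb U ->
  H2 nc Y L Sb U M P ->
  (forall (X : S) (l : nat), (1 <= l)%N ->
     ~ appears (nderiv src tgt l X) ([ffun _ => 0%N] : xmon S)) /\
  (forall (X : S) (l : nat), ~ is_inter nc L U X -> (1 <= l)%N ->
     forall a : xmon S, mdeg a = 1%N -> appears (nderiv src tgt l X) a ->
       exists W : S, a = cplx1 W /\ reacts_to src tgt nc L U W X).
Proof.
move=> /classify Hcl _; split.
  move=> X l hl [b Hb]; case: l hl Hb => // l _; rewrite /nderiv iterS => Hb.
  apply: Hb; rewrite /tdiff big1 // => i _; rewrite big1 // => r _.
  case: ifP => // /andP [Hle _]; exfalso.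
  have [c [j [_ _ [[Hs _]|[Hs _]]]]] := Hcl r; rewrite Hs in Hle.
    by move/forallP: Hle => /(_ (Y c)); rewrite !ffunE eqxx.
  by move/forallP: Hle => /(_ (U c j)); rewrite !ffunE eqxx.
move=> X l HX hl a Ha [b Hb].
have claim : forall l a b, mdeg a = 1%N -> (nderiv src tgt l.+1 X a b != 0)%R ->
    exists W : S, a = cplx1 W /\ reacts_to src tgt nc L U W X.
  elim=> [|k IH] a' b' Ha' Hb'.
    rewrite /nderiv iterS /= in Hb'.
    have [W [r [i [c [j [j' [Ea [Hs [HW [[hc hj] [Ht [HY [HS [Hn1 Hp]]]]]]]]]]]]]] :=
      key Hcl Ha' Hb'.
    rewrite /pvar in Hp; move: Hp; case: ifP => // /andP [/eqP /cplx1_inj Hi _] _.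
    subst i.
    exists W; split => //; split; first by exists c, j.
    have HsX : src r X = 0%N.
      rewrite Hs cplx1E; case: eqP => // EX; exfalso; apply: HX.
      by rewrite EX HW; exists c, j.
    move: Hn1; rewrite HsX Ht cplx2E.
    case: (eqVneq X (Y c)) => [EY|nY].
      move=> _; exists r, (Sb c j'); split => //; by rewrite Ht EY.
    case: (eqVneq X (Sb c j')) => [ES|nS] /=; last by [].
    move=> _; exists r, (Y c); split => //; by rewrite Ht ES cplx2C.
  rewrite /nderiv iterS in Hb'.
  have [W [r [i [c [j [j' [Ea [Hs [HW [[hc hj] [Ht [HY [HS [Hn1 Hp]]]]]]]]]]]]]] :=
    key Hcl Ha' Hb'.
  have [W' [Ei [Hint _]]] := IH _ _ (mdeg_cplx1 i) Hp.
  have Ei' := cplx1_inj Ei; subst W'.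
  have Hti : tgt r i = 0%N.
    rewrite Ht cplx2E; case: eqP => [EY|_]; first by exfalso; apply: HY; rewrite -EY.
    by case: eqP => [ES|_] //; exfalso; apply: HS; rewrite -ES.
  move: Hn1; rewrite Hti Hs cplx1E; case: (eqVneq i W) => [EW|nW] H1; last by move: H1; rewrite subrr eqxx.
  exists i; split; first by rewrite Ea EW.
  by have [W' [Ei2 Hr]] := IH _ _ (mdeg_cplx1 i) Hp; rewrite (cplx1_inj Ei2).
case: l hl Hb => // l _ Hb.
by apply: (claim l a b Ha); apply/eqP.
Qed.
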